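(* Let $\mathcal{X}_1,\mathcal{X}_2$ be non-empty sets, $\mathcal{B}_1\subseteq\mathcal{P}(\mathcal{X}_1)\setminus\{\emptyset\}$, $\mathcal{B}_2\subseteq\mathcal{P}(\mathcal{X}_2)\setminus\{\emptyset\}$, and for $i\in\{1,2\}$ let $\underline{P}_i$ be a coherent conditional lower prevision on $\mathcal{C}_i\subseteq\mathcal{C}(\mathcal{X}_i)$ with natural extension $\underline{E}_i$ to $\mathcal{C}(\mathcal{X}_i)$, and let $\overline{E}_i(g):=-\underline{E}_i(-g)$. Let $\{i,j\}=\{1,2\}$. Then for any $h\in\mathcal{G}(\mathcal{X}_j)$ and any $\mathcal{B}_i$-measurable $g\in\mathcal{G}_{\geq0}(\mathcal{X}_i)$, $$(\underline{P}_1\otimes\underline{P}_2)(gh)=\underline{E}_i\big(g\,\underline{E}_j(h)\big)=\begin{cases}\underline{E}_i(g)\underline{E}_j(h)&\text{if }\underline{E}_j(h)\geq0,\\ \overline{E}_i(g)\underline{E}_j(h)&\text{if }\underline{E}_j(h)\leq0.\end{cases}$$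
   Context: Gambles on a non-empty set $\mathcal{X}$ are bounded real functions; $\mathcal{G}(\mathcal{X})$, $\mathcal{G}_{\geq0}(\mathcal{X})$, $\mathcal{G}_{>0}(\mathcal{X})$ denote all gambles, non-negative gambles, non-negative non-zero gambles. For $\mathcal{A}\subseteq\mathcal{G}(\mathcal{X})$: $\mathrm{posi}(\mathcal{A}):=\{\sum_{i=1}^n\lambda_if_i\colon n\in\mathbb{N},\lambda_i>0,f_i\in\mathcal{A}\}$, $\mathcal{E}(\mathcal{A}):=\mathrm{posi}(\mathcal{A}\cup\mathcal{G}_{>0}(\mathcal{X}))$. A coherent set of desirable gambles $\mathcal{D}\subseteq\mathcal{G}(\mathcal{X})$ satisfies: (D1) $f\geq0,f\neq0\Rightarrow f\in\mathcal{D}$; (D2) $f\in\mathcal{D},\lambda>0\Rightarrow\lambda f\in\mathcal{D}$; (D3) $f,g\in\mathcal{D}\Rightarrow f+g\in\mathcal{D}$; (D4) $f\leq0\Rightarrow f\notin\mathcal{D}$. $\mathcal{C}(\mathcal{X}):=\mathcal{G}(\mathcal{X})\times(\mathcal{P}(\mathcal{X})\setminus\{\emptyset\})$; a conditional lower prevision on $\mathcal{C}\subseteq\mathcal{C}(\mathcal{X})$ is a map $(f,B)\mapsto\underline{P}(f\vert B)\in\mathbb{R}\cup\{\pm\infty\}$. For $\mathcal{D}\subseteq\mathcal{G}(\mathcal{X})$, $\underline{P}_{\mathcal{D}}(f\vert B):=\sup\{\mu\in\mathbb{R}\colon[f-\mu]\mathbb{I}_B\in\mathcal{D}\}$. $\underline{P}$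 is coherent if $\underline{P}=\underline{P}_{\mathcal{D}}$ on its domain for some coherent set of desirable gambles $\mathcal{D}$. For coherent $\underline{P}$ on $\mathcal{C}$, $\mathcal{E}(\underline{P}):=\mathcal{E}(\{[f-\mu]\mathbb{I}_B\colon(f,B)\in\mathcal{C},\mu<\underline{P}(f\vert B)\})$ and its natural extension is $\underline{E}(f\vert B):=\underline{P}_{\mathcal{E}(\underline{P})}(f\vert B)$ for all $(f,B)\in\mathcal{C}(\mathcal{X})$. Unconditional notation: $\underline{P}(f):=\underline{P}(f\vert\mathcal{X})$. Gambles on $\mathcal{X}_i$ are identified with their cylindrical extensions to $\mathcal{X}_1\times\mathcal{X}_2$, events $B\subseteq\mathcal{X}_1$ with $B\times\mathcal{X}_2$ (similarly for $\mathcal{X}_2$). For coherent sets of desirable gambles $\mathcal{D}_1,\mathcal{D}_2$: $\mathcal{D}_1\otimes\mathcal{D}_2:=\mathcal{E}(\mathcal{A}_{1\to2}\cup\mathcal{A}_{2\to1})$, $\mathcal{A}_{1\to2}:=\{f_2(X_2)\mathbb{I}_{B_1}(X_1)\colon f_2\in\mathcal{D}_2,B_1\in\mathcal{B}_1\cup\{\mathcal{X}_1\}\}$, $\mathcal{A}_{2\to1}:=\{f_1(X_1)\mathbb{I}_{B_2}(X_2)\colon f_1\in\mathcal{D}_1,B_2\in\mathcal{B}_2\cup\{\mathcal{X}_2\}\}$. Then $(\underline{P}_1\otimes\underline{P}_2)(f\vert B):=\underline{P}_{\mathcal{D}}(f\vert B)$ for $(f,B)\in\mathcal{C}(\mathcal{X}_1\times\mathcal{X}_2)$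 with $\mathcal{D}=\mathcal{E}(\underline{P}_1)\otimes\mathcal{E}(\underline{P}_2)$. Measurability: for $\mathcal{B}\subseteq\mathcal{P}(\mathcal{X})\setminus\{\emptyset\}$, $g\in\mathcal{G}_{\geq0}(\mathcal{X})$ is simple $\mathcal{B}$-measurable if $g=c_0+\sum_{k=1}^nc_k\mathbb{I}_{B_k}$ for some $n\in\mathbb{N}\cup\{0\}$, $c_0,\dots,c_n\geq0$, $B_k\in\mathcal{B}$; $g\in\mathcal{G}_{\geq0}(\mathcal{X})$ is $\mathcal{B}$-measurable if there is a sequence of simple $\mathcal{B}$-measurable $g_n\in\mathcal{G}_{\geq0}(\mathcal{X})$ with $\sup|g-g_n|\to0$. *)

(* Defs.v *)
From HB Require Import structures.
From mathcomp Require Import all_boot all_order all_algebra.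
From mathcomp Require Import all_classical all_reals all_analysis.
Set Implicit Arguments. Unset Strict Implicit. Unset Printing Implicit Defensive.
Import Order.TTheory GRing.Theory Num.Theory.
Local Open Scope classical_set_scope.
Local Open Scope ring_scope.

Section Gambles.
Variable R : realType.

Definition gamble (X : Type) (f : X -> R) : Prop :=
  exists M : R, forall x, `|f x| <= M.

Definition G_ge0 (X : Type) : set (X -> R) :=
  [set f | gamble f /\ (forall x, 0 <= f x)].

Definition G_gt0 (X : Type) : set (X -> R) :=
  [set f | gamble f /\ (forall x, 0 <= f x) /\ exists x, f x != 0].

Definition posi (X : Type) (A : set (X -> R)) : set (X -> R) :=
  [set f | exists (n : nat) (lam : 'I_n -> R) (fs : 'I_n -> X -> R),
     (0 < n)%N /\ (forall k, 0 < lam k) /\ (forall k, A (fs k)) /\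
     f = (fun x => \sum_(k < n) lam k * fs k x)].

Definition Eext (X : Type) (A : set (X -> R)) : set (X -> R) :=
  posi (A `|` @G_gt0 X).

Definition coherent_D (X : Type) (D : set (X -> R)) : Prop :=
  (forall f, D f -> gamble f) /\
  (forall f, G_gt0 f -> D f) /\
  (forall f (lam : R), D f -> 0 < lam -> D (fun x => lam * f x)) /\
  (forall f g, D f -> D g -> D (fun x => f x + g x)) /\
  (forall f, (forall x, f x <= 0) -> ~ D f).

Definition CX (X : Type) : set ((X -> R) * set X) :=
  [set p | gamble p.1 /\ p.2 != set0].

Definition cond_gamble (X : Type) (f : X -> R) (B : set X) (mu : R) : X -> R :=
  fun x => (f x - mu) * \1_B x.

(* P_D(f | B) := sup { mu in R : [f - mu] I_B in D }  (sup of empty set = -oo) *)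
Definition P_of (X : Type) (D : set (X -> R)) (f : X -> R) (B : set X) : \bar R :=
  ereal_sup [set (mu%:E) | mu in [set mu : R | D (cond_gamble f B mu)]].

Definition coherent_P (X : Type) (C : set ((X -> R) * set X))
    (P : (X -> R) -> set X -> \bar R) : Prop :=
  C `<=` @CX X /\
  exists D : set (X -> R), coherent_D D /\
    forall f B, C (f, B) -> P f B = P_of D f B.

Definition E_of_P (X : Type) (C : set ((X -> R) * set X))
    (P : (X -> R) -> set X -> \bar R) : set (X -> R) :=
  Eext [set g | exists f B (mu : R),
          C (f, B) /\ (mu%:E < P f B)%E /\ g = cond_gamble f B mu].

Definition nat_ext (X : Type) (C : set ((X -> R) * set X))
    (P : (X -> R) -> set X -> \bar R) (f : X -> R) (B : set X) : \bar R :=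
  P_of (E_of_P C P) f B.

Definition nat_ext_u (X : Type) (C : set ((X -> R) * set X))
    (P : (X -> R) -> set X -> \bar R) (f : X -> R) : \bar R :=
  nat_ext C P f setT.

Definition nat_ext_upper (X : Type) (C : set ((X -> R) * set X))
    (P : (X -> R) -> set X -> \bar R) (f : X -> R) : \bar R :=
  (- nat_ext_u C P (fun x => (- f x)%R))%E.

Definition D_prod (X1 X2 : Type) (B1 : set (set X1)) (B2 : set (set X2))
    (D1 : set (X1 -> R)) (D2 : set (X2 -> R)) : set (X1 * X2 -> R) :=
  Eext ([set g | exists f2 b1, D2 f2 /\ (B1 `|` [set setT]) b1 /\
                 g = (fun x => f2 x.2 * \1_b1 x.1)] `|`
        [set g | exists f1 b2, D1 f1 /\ (B2 `|` [set setT]) b2 /\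
                 g = (fun x => f1 x.1 * \1_b2 x.2)]).

Definition prod_P (X1 X2 : Type) (B1 : set (set X1)) (B2 : set (set X2))
    (C1 : set ((X1 -> R) * set X1)) (P1 : (X1 -> R) -> set X1 -> \bar R)
    (C2 : set ((X2 -> R) * set X2)) (P2 : (X2 -> R) -> set X2 -> \bar R)
    (f : X1 * X2 -> R) (B : set (X1 * X2)) : \bar R :=
  P_of (D_prod B1 B2 (E_of_P C1 P1) (E_of_P C2 P2)) f B.

Definition simple_meas (X : Type) (B : set (set X)) (g : X -> R) : Prop :=
  exists (n : nat) (c0 : R) (c : 'I_n -> R) (Bs : 'I_n -> set X),
    0 <= c0 /\ (forall k, 0 <= c k) /\ (forall k, B (Bs k)) /\
    g = (fun x => c0 + \sum_(k < n) c k * \1_(Bs k) x).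

(* sup |g - g_n| -> 0, written out as uniform convergence *)
Definition B_measurable (X : Type) (B : set (set X)) (g : X -> R) : Prop :=
  G_ge0 g /\
  exists gs : nat -> X -> R,
    (forall n, simple_meas B (gs n) /\ G_ge0 (gs n)) /\
    forall eps : R, 0 < eps -> exists N : nat, forall n, (N <= n)%N ->
      forall x, `|g x - gs n x| <= eps.

End Gambles.

(* Main.v *)
Require Import Defs.
From HB Require Import structures.
From mathcomp Require Import all_boot all_order all_algebra.
From mathcomp Require Import all_classical all_reals all_analysis.
From mathcomp Require Import ring lra zify.
Import Order.TTheory GRing.Theory Num.Theory.
Local Open Scope classical_set_scope.
Local Open Scope ring_scope.
Set Implicit Arguments. Unset Strict Implicit. Unset Printing Implicit Defensive.

Section Gam.
Variable R : realType.

Lemma le_of_lt_all (k a : R) : (forall v, v < k -> v <= a) -> k <= a.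
Proof.
move=> H; rewrite leNgt; apply/negP => ak.
have := H ((a + k) / 2); have [h1 h2] := midf_lt ak.
by move=> /(_ h2); rewrite leNgt h1.
Qed.

Lemma indic_01 {T : Type} (A : set T) x : 0 <= \1_A x :> R /\ \1_A x <= 1 :> R.
Proof. by rewrite indicE; case: (x \in A) => /=; rewrite ?ler01 ?lexx. Qed.

Lemma gamble_cst (T : Type) (k : R) : gamble (fun _ : T => k).
Proof. by exists `|k|. Qed.

Lemma gamble_add (T : Type) (f g : T -> R) : gamble f -> gamble g ->
  gamble (fun x => f x + g x).
Proof.
move=> [M hM] [N hN]; exists (M + N) => x.
by apply: le_trans (ler_normD _ _) _; apply: lerD.
Qed.

Lemma gamble_mul (T : Type) (f g : T -> R) : gamble f -> gamble g ->
  gamble (fun x => f x * g x).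
Proof.
move=> [M hM] [N hN]; exists (M * N) => x.
by rewrite normrM; apply: ler_pM.
Qed.

Lemma gamble_opp (T : Type) (f : T -> R) : gamble f -> gamble (fun x => - f x).
Proof. by move=> [M hM]; exists M => x; rewrite normrN. Qed.

Lemma gamble_sub (T : Type) (f g : T -> R) : gamble f -> gamble g ->
  gamble (fun x => f x - g x).
Proof. by move=> hf hg; apply: gamble_add => //; apply: gamble_opp. Qed.

Lemma gamble_indic (T : Type) (A : set T) : gamble (fun x => \1_A x : R).
Proof.
exists 1 => x; have [h1 h2] := indic_01 A x; by rewrite ger0_norm.
Qed.

Lemma gamble_sum (T : Type) n (F : nat -> T -> R) :
  (forall i, (i < n)%N -> gamble (F i)) ->
  gamble (fun x => \sum_(i < n) F i x).
Proof.
elim: n => [|n IH] H.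
  have -> : (fun x => \sum_(i < 0) F i x) = (fun _ => 0) by apply: funext => x; rewrite big_ord0.
  exact: gamble_cst.
have -> : (fun x => \sum_(i < n.+1) F i x) = (fun x => \sum_(i < n) F i x + F n x).
  by apply: funext => x; rewrite big_ord_recr.
apply: gamble_add; last exact: H.
by apply: IH => i hi; apply: H; rewrite ltnS ltnW.
Qed.

Lemma gamble_comp (T U : Type) (f : T -> R) (p : U -> T) : gamble f ->
  gamble (fun x => f (p x)).
Proof. by move=> [M hM]; exists M. Qed.

End Gam.

Section Cone.
Variable R : realType.
Variable X : Type.
Hypothesis hX : [set: X] !=set0.

Definition cone (D : set (X -> R)) : Prop :=
  (forall f, G_gt0 f -> D f) /\
  (forall f (lam : R), D f -> 0 < lam -> D (fun x => lam * f x)) /\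
  (forall f g, D f -> D g -> D (fun x => f x + g x)) /\
  (forall f, (forall x, f x <= 0) -> ~ D f).

Variable D : set (X -> R).
Hypothesis hD : cone D.

Definition Sset (f : X -> R) : set R := [set mu | D (fun x => f x - mu)].
Definition L (f : X -> R) : R := sup (Sset f).

Lemma D_gt0 f : G_gt0 f -> D f. Proof. by case: hD => + _; apply. Qed.
Lemma D_scale f lam : D f -> 0 < lam -> D (fun x => lam * f x).
Proof. by case: hD => _ [+ _]; apply. Qed.
Lemma D_add f g : D f -> D g -> D (fun x => f x + g x).
Proof. by case: hD => _ [_ [+ _]]; apply. Qed.
Lemma D_nle0 f : (forall x, f x <= 0) -> ~ D f.
Proof. by case: hD => _ [_ [_ +]]; apply. Qed.

Lemma D_up f g : D f -> gamble g -> (forall x, 0 <= g x) ->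
  D (fun x => f x + g x).
Proof.
move=> Df gg g0.
have [[x gx]|nz] := pselect (exists x, g x != 0).
  by apply: D_add => //; apply: D_gt0; split => //; split => //; exists x.
have -> : (fun x => f x + g x) = f; last by [].
apply: funext => x; have : g x = 0.
  by apply/eqP; apply/negPn/negP => gx; apply: nz; exists x.
by move=> ->; rewrite addr0.
Qed.

Definition Dplus (f : X -> R) := D f \/ G_ge0 f.

Lemma Dplus_add f g : Dplus f -> Dplus g -> Dplus (fun x => f x + g x).
Proof.
move=> [Df|[gf f0]] [Dg|[gg g0]].
- by left; apply: D_add.
- by left; apply: D_up.
- left; have -> : (fun x => f x + g x) = (fun x => g x + f x).
    by apply: funext => x; rewrite addrC.
  by apply: D_up.
- right; split; first exact: gamble_add.
  by move=> x; apply: addr_ge0.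
Qed.

Lemma Dplus_scale f lam : Dplus f -> 0 <= lam -> Dplus (fun x => lam * f x).
Proof.
move=> Df; rewrite le_eqVlt => /predU1P[<-|lam0].
  right; split; first by exists 0 => x; rewrite mul0r normr0.
  by move=> x; rewrite mul0r.
case: Df => [Df|[gf f0]]; first by left; apply: D_scale.
right; split; first by apply: gamble_mul => //; apply: gamble_cst.
by move=> x; apply: mulr_ge0 => //; apply: ltW.
Qed.

Lemma Sset_down f v v' : Sset f v -> v' <= v -> Sset f v'.
Proof.
rewrite /Sset /= => Dv le.
have -> : (fun x => f x - v') = (fun x => (f x - v) + (v - v')).
  by apply: funext => x; rewrite addrA subrK.
by apply: D_up => //; [apply: gamble_cst | move=> x; rewrite subr_ge0].
Qed.

Lemma Sset_lb f k v : gamble f -> (forall x, k <= f x) -> v < k -> Sset f v.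
Proof.
move=> gf fk vk; apply: D_gt0; split.
  by apply: gamble_sub => //; apply: gamble_cst.
split; first by move=> x; rewrite subr_ge0 (le_trans (ltW vk)).
case: hX => x _; exists x; rewrite subr_eq0; apply/negP => /eqP e.
by have := fk x; rewrite e leNgt vk.
Qed.

Lemma Sset_ub f k v : (forall x, f x <= k) -> Sset f v -> v <= k.
Proof.
move=> fk Sv; rewrite leNgt; apply/negP => kv; apply: (@D_nle0 (fun x => f x - v)) Sv => x.
by rewrite subr_le0 (le_trans (fk x)) // ltW.
Qed.

Lemma gamble_bounds (f : X -> R) : gamble f ->
  exists M, (forall x, - M <= f x) /\ (forall x, f x <= M).
Proof.
move=> [M hM]; exists M; split => x; have := hM x; rewrite ler_norml;
  by case/andP.
Qed.

Lemma has_sup_S f : gamble f -> has_sup (Sset f).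
Proof.
move=> gf; have [M [lo hi]] := gamble_bounds gf; split.
  exists (- M - 1); apply: (Sset_lb gf lo); lra.
by exists M => v Sv; apply: Sset_ub hi Sv.
Qed.

Lemma L_ge f v : gamble f -> Sset f v -> v <= L f.
Proof. by move=> gf Sv; apply: ub_le_sup => //; case: (has_sup_S gf). Qed.

Lemma L_gt f v : gamble f -> v < L f -> Sset f v.
Proof.
move=> gf vL; have [[w Sw] _] := has_sup_S gf.
have [y Sy vy] := sup_gt (ex_intro _ w Sw) vL.
by apply: Sset_down Sy (ltW vy).
Qed.

Lemma le_L f k : gamble f -> (forall x, k <= f x) -> k <= L f.
Proof.
move=> gf fk; apply: le_of_lt_all => v vk; apply: L_ge => //.
exact: Sset_lb gf fk vk.
Qed.

Lemma L_le f k : gamble f -> (forall x, f x <= k) -> L f <= k.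
Proof.
move=> gf fk; have [[w Sw] _] := has_sup_S gf.
by apply: ge_sup; [exists w | move=> v Sv; apply: Sset_ub fk Sv].
Qed.

Lemma L_cst k : L (fun _ => k) = k.
Proof.
apply/eqP; rewrite eq_le; apply/andP; split.
  by apply: L_le => //; apply: gamble_cst.
by apply: le_L => //; apply: gamble_cst.
Qed.

Lemma L_D f : gamble f -> D f -> 0 <= L f.
Proof.
move=> gf Df; apply: L_ge => //; rewrite /Sset /=.
by have -> : (fun x => f x - 0) = f by apply: funext => x; rewrite subr0.
Qed.

Lemma L_Dplus f : gamble f -> Dplus f -> 0 <= L f.
Proof. by move=> gf [Df|[_ f0]]; [apply: L_D | apply: le_L]. Qed.

Lemma L_add f g : gamble f -> gamble g -> L f + L g <= L (fun x => f x + g x).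
Proof.
move=> gf gg; apply: le_of_lt_all => v vlt.
set e := (L f + L g - v) / 2.
have e0 : 0 < e by rewrite /e; lra.
have Sf : Sset f (L f - e) by apply: L_gt => //; lra.
have Sg : Sset g (L g - e) by apply: L_gt => //; lra.
have -> : v = (L f - e) + (L g - e) by rewrite /e; lra.
apply: L_ge; first exact: gamble_add.
rewrite /Sset /=.
have -> : (fun x => f x + g x - (L f - e + (L g - e))) =
  (fun x => (f x - (L f - e)) + (g x - (L g - e))).
  by apply: funext => x; lra.
exact: D_add.
Qed.

Lemma L_scale_ge f lam : gamble f -> 0 < lam -> lam * L f <= L (fun x => lam * f x).
Proof.
move=> gf l0; apply: le_of_lt_all => v vlt.
have S1 : Sset f (v / lam).
  by apply: L_gt => //; rewrite ltr_pdivrMr // mulrC.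
have -> : v = lam * (v / lam) by rewrite mulrC divfK // gt_eqF.
apply: L_ge; first by apply: gamble_mul => //; apply: gamble_cst.
rewrite /Sset /=.
have -> : (fun x => lam * f x - lam * (v / lam)) =
  (fun x => lam * (f x - v / lam)) by apply: funext => x; rewrite mulrBr.
exact: D_scale.
Qed.

Lemma L_scale f lam : gamble f -> 0 < lam -> L (fun x => lam * f x) = lam * L f.
Proof.
move=> gf l0; apply/eqP; rewrite eq_le; apply/andP; split; last exact: L_scale_ge.
have gl : gamble (fun x => lam * f x) by apply: gamble_mul => //; apply: gamble_cst.
have il : 0 < lam^-1 by rewrite invr_gt0.
have := L_scale_ge gl il.
have -> : (fun x => lam^-1 * (lam * f x)) = f.
  by apply: funext => x; rewrite mulrA mulVf ?mul1r // gt_eqF.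
by rewrite ler_pdivrMl // mulrC.
Qed.

Lemma L_scale0 f lam : gamble f -> 0 <= lam -> L (fun x => lam * f x) = lam * L f.
Proof.
move=> gf; rewrite le_eqVlt => /predU1P[<-|l0]; last exact: L_scale.
rewrite mul0r; have -> : (fun x => 0 * f x) = (fun _ => 0).
  by apply: funext => x; rewrite mul0r.
exact: L_cst.
Qed.

Lemma L_shift f k : gamble f -> L (fun x => f x + k) = L f + k.
Proof.
move=> gf; have gk : gamble (fun x => f x + k) by apply: gamble_add => //; apply: gamble_cst.
have E v : Sset (fun x => f x + k) v <-> Sset f (v - k).
  rewrite /Sset /=; have -> // : (fun x => f x + k - v) = (fun x => f x - (v - k)).
  by apply: funext => x; lra.
apply/eqP; rewrite eq_le; apply/andP; split.
  have [[w Sw] _] := has_sup_S gk.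
  apply: ge_sup; first by exists w.
  move=> v /E Sv; have := L_ge gf Sv; lra.
apply: le_of_lt_all => v vlt; apply: L_ge => //; apply/E; apply: L_gt => //; lra.
Qed.

Lemma L_neg f : gamble f -> L f + L (fun x => - f x) <= 0.
Proof.
move=> gf; apply: le_trans (L_add gf (gamble_opp gf)) _.
have -> : (fun x => f x + - f x) = (fun _ => 0) by apply: funext => x; rewrite subrr.
by rewrite L_cst.
Qed.

Lemma L_ext f g : f = g -> L f = L g. Proof. by move=> ->. Qed.

End Cone.

Section HB.
Variable R : realType.
Variable X : Type.
Hypothesis hX : [set: X] !=set0.
Variable D : set (X -> R).
Hypothesis hD : cone D.
Variable vs : nat -> X -> R.
Hypothesis hvs : forall i, gamble (vs i).

Let LL := L D.

Definition W n (t : nat -> R) := fun x => \sum_(i < n) t i * vs i x.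
Definition Q n (t qs : nat -> R) := \sum_(i < n) t i * qs i.
Definition Dom n qs := forall t, LL (W n t) <= Q n t qs.

Lemma gamble_W n t : gamble (W n t).
Proof.
by apply: (@gamble_sum _ _ n (fun i x => t i * vs i x)) => i _;
  apply: gamble_mul => //; apply: gamble_cst.
Qed.

Lemma sum_div n (t a : nat -> R) r : r != 0 ->
  r * \sum_(i < n) (t i / r) * a i = \sum_(i < n) t i * a i.
Proof.
move=> r0; rewrite mulr_sumr; apply: eq_bigr => i _.
by rewrite mulrA [r * _]mulrC divfK.
Qed.

Lemma sum_delta n j (a : nat -> R) : (j < n)%N ->
  \sum_(i < n) ((i : nat) == j)%:R * a i = a j.
Proof.
move=> hj; rewrite (bigD1 (Ordinal hj)) //= eqxx mul1r big1 ?addr0 // => i ne.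
rewrite (_ : ((i : nat) == j) = false) ?mul0r //; apply/negbTE.
by apply: contra ne => /eqP e; apply/eqP/val_inj.
Qed.

Lemma Dom_le n qs j : Dom n qs -> (j < n)%N -> LL (vs j) <= qs j.
Proof.
move=> Hd hj; have := Hd (fun i => ((i : nat) == j)%:R).
have -> : Q n (fun i => ((i : nat) == j)%:R) qs = qs j by rewrite /Q; exact: (@sum_delta n j qs hj).
have -> // : W n (fun i => ((i : nat) == j)%:R) = vs j.
by apply: funext => x; rewrite /W; exact: (@sum_delta n j (fun i => vs i x) hj).
Qed.

Lemma W_add n t t' x : W n (fun i => t i + t' i) x = W n t x + W n t' x.
Proof. by rewrite /W -big_split; apply: eq_bigr => i _; rewrite mulrDl. Qed.

Lemma Q_add n t t' qs : Q n (fun i => t i + t' i) qs = Q n t qs + Q n t' qs.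
Proof. by rewrite /Q -big_split; apply: eq_bigr => i _; rewrite mulrDl. Qed.

Lemma HB_step n qs : Dom n qs ->
  exists q, Dom n.+1 (fun i => if i == n then q else qs i).
Proof.
move=> Hd; set v := vs n.
have gv : gamble v by apply: hvs.
pose U := [set LL (fun x => W n t x + v x) - Q n t qs | t in [set: nat -> R]].
have bnd t t' : LL (fun x => W n t x + v x) - Q n t qs <=
                Q n t' qs - LL (fun x => W n t' x - v x).
  have := L_add hX hD (gamble_add (gamble_W n t) gv) (gamble_sub (gamble_W n t') gv).
  have -> : (fun x => W n t x + v x + (W n t' x - v x)) = W n (fun i => t i + t' i).
    by apply: funext => x; rewrite W_add; lra.
  move=> h1; have := Hd (fun i => t i + t' i); rewrite Q_add.
  rewrite -/LL in h1; lra.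
have U0 : U !=set0 by exists (LL (fun x => W n (fun _ => 0) x + v x) - Q n (fun _ => 0) qs),
   (fun _ => 0).
have hsU : has_sup U.
  split => //; exists (Q n (fun _ => 0) qs - LL (fun x => W n (fun _ => 0) x - v x)).
  by move=> u [t _ <-]; apply: bnd.
exists (sup U) => t.
have -> : W n.+1 t = (fun x => W n t x + t n * v x).
  by apply: funext => x; rewrite /W big_ord_recr.
have -> : Q n.+1 t (fun i => if i == n then sup U else qs i) = Q n t qs + t n * sup U.
  rewrite /Q big_ord_recr /= eqxx; congr (_ + _); apply: eq_bigr => i _.
  by rewrite ltn_eqF.
have [s0|s0|s0] := ltgtP (t n) 0.
- set r := - t n; have r0 : 0 < r by rewrite /r oppr_gt0.
  have rn : r != 0 by rewrite gt_eqF.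
  pose t' := fun i => t i / r.
  have -> : (fun x => W n t x + t n * v x) = (fun x => r * (W n t' x - v x)).
    apply: funext => x; rewrite mulrBr /W /t' /= (@sum_div n t (fun i => vs i x) r rn) /r; lra.
  rewrite /LL L_scale //; last exact: gamble_sub (gamble_W n t') gv.
  have : sup U <= Q n t' qs - LL (fun x => W n t' x - v x).
    by apply: ge_sup => // u [t'' _ <-]; apply: bnd.
  have -> : Q n t qs = r * Q n t' qs by rewrite /Q /t' /= (@sum_div n t qs r rn).
  rewrite /r -/LL => h; nra.
- set r := t n; have r0 : 0 < r by [].
  have rn : r != 0 by rewrite gt_eqF.
  pose t' := fun i => t i / r.
  have -> : (fun x => W n t x + t n * v x) = (fun x => r * (W n t' x + v x)).
    apply: funext => x; rewrite mulrDr /W /t' /= (@sum_div n t (fun i => vs i x) r rn) /r; lra.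
  rewrite /LL L_scale //; last exact: gamble_add (gamble_W n t') gv.
  have : LL (fun x => W n t' x + v x) - Q n t' qs <= sup U.
    by apply: sup_upper_bound => //; exists t'.
  have -> : Q n t qs = r * Q n t' qs by rewrite /Q /t' /= (@sum_div n t qs r rn).
  rewrite -/LL => h; nra.
- rewrite s0 mul0r addr0; have := Hd t; congr (_ <= _); apply: L_ext.
  by apply: funext => x; rewrite mul0r addr0.
Qed.


Variable h : X -> R.
Hypothesis v0 : vs 0 = (fun _ => 1).
Hypothesis v1 : vs 1 = h.

Lemma HB_base : Dom 2 (fun i => if i == 0%N then 1 else LL h).
Proof.
have gh : gamble h by rewrite -v1.
move=> t; rewrite /Q /W.
have -> : (fun x => \sum_(i < 2) t i * vs i x) = (fun x => t 1%N * h x + t 0%N).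
  by apply: funext => x; rewrite !big_ord_recr big_ord0 /= v0 v1; lra.
rewrite !big_ord_recr big_ord0 /= /LL L_shift //; last first.
  by apply: gamble_mul => //; apply: gamble_cst.
have [t0|t0] := leP 0 (t 1%N).
  by rewrite L_scale0 //; lra.
have -> : (fun x => t 1%N * h x) = (fun x => (- t 1%N) * (- h x)).
  by apply: funext => x; rewrite mulrNN.
rewrite L_scale; first (have := L_neg hX hD gh; rewrite -/LL; nra).
- exact: hX.
- exact: hD.
- exact: gamble_opp gh.
- by rewrite oppr_gt0.
Qed.

Lemma HB_full k : exists qs, qs 0%N = 1 /\ qs 1%N = LL h /\ Dom k.+2 qs.
Proof.
elim: k => [|k [qs [q0 [q1 Hd]]]].
  by exists (fun i => if i == 0%N then 1 else LL h); split => //; split => //; apply: HB_base.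
have [q Hq] := HB_step Hd.
by exists (fun i => if i == k.+2 then q else qs i).
Qed.

End HB.

Section Posi.
Variable R : realType.
Variable T : Type.
Variable A : set (T -> R).

Lemma posi_in f : A f -> posi A f.
Proof.
move=> Af; exists 1%N, (fun _ => 1), (fun _ => f); split => //; split => //; split => //.
by apply: funext => x; rewrite big_ord1 mul1r.
Qed.

Lemma posi_scale f lam : posi A f -> 0 < lam -> posi A (fun x => lam * f x).
Proof.
move=> [n [la [fs [n0 [l0 [Af ->]]]]]] lam0.
exists n, (fun k => lam * la k), fs; split => //; split; first by move=> k; apply: mulr_gt0.
split => //; apply: funext => x; rewrite mulr_sumr; apply: eq_bigr => i _.
by rewrite mulrA.
Qed.

Lemma posi_add f g : posi A f -> posi A g -> posi A (fun x => f x + g x).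
Proof.
move=> [n [la [fs [n0 [l0 [Af ->]]]]]] [m [la' [fs' [m0 [l0' [Af' ->]]]]]].
exists (n + m)%N, (fun i => match fintype.split i with inl j => la j | inr k => la' k end),
  (fun i => match fintype.split i with inl j => fs j | inr k => fs' k end).
split; first by rewrite addn_gt0 n0.
split; first by move=> i; case: (fintype.split i).
split; first by move=> i; case: (fintype.split i).
apply: funext => x; rewrite big_split_ord /=; congr (_ + _); apply: eq_bigr => i _.
  by rewrite (unsplitK (inl _ i)).
by rewrite (unsplitK (inr _ i)).
Qed.

Lemma posi_sub (S : set (T -> R)) :
  (forall f g, S f -> S g -> S (fun x => f x + g x)) ->
  (forall f lam, S f -> 0 < lam -> S (fun x => lam * f x)) ->
  A `<=` S -> posi A `<=` S.
Proof.
move=> Sadd Ssc AS f [n [la [fs [n0 [l0 [Af ->]]]]]].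
elim: n la fs n0 l0 Af => [//|n IH] la fs _ l0 Af.
case: n IH la fs l0 Af => [|n] IH la fs l0 Af.
  have -> : (fun x => \sum_(k < 1) la k * fs k x) = (fun x => la ord0 * fs ord0 x).
    by apply: funext => x; rewrite big_ord1.
  by apply: Ssc => //; apply: AS.
have -> : (fun x => \sum_(k < n.+2) la k * fs k x) =
  (fun x => (\sum_(k < n.+1) la (widen_ord (leqnSn _) k) * fs (widen_ord (leqnSn _) k) x)
     + la ord_max * fs ord_max x).
  by apply: funext => x; rewrite big_ord_recr.
apply: Sadd; first by apply: IH.
by apply: Ssc => //; apply: AS.
Qed.


Lemma posi_add_nn f g a : posi A f -> 0 <= a -> A g -> posi A (fun x => f x + a * g x).
Proof.
move=> pf; rewrite le_eqVlt => /predU1P[<-|a0] Ag.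
  by have -> : (fun x => f x + 0 * g x) = f by apply: funext => x; rewrite mul0r addr0.
by apply: posi_add => //; apply: posi_scale => //; apply: posi_in.
Qed.

Lemma posi_add_sum f m (a : 'I_m -> R) (G : 'I_m -> T -> R) : posi A f ->
  (forall k, 0 <= a k) -> (forall k, A (G k)) ->
  posi A (fun x => f x + \sum_(k < m) a k * G k x).
Proof.
elim: m a G => [|m IH] a G pf a0 AG.
  by have -> : (fun x => f x + \sum_(k < 0) a k * G k x) = f
    by apply: funext => x; rewrite big_ord0 addr0.
have -> : (fun x => f x + \sum_(k < m.+1) a k * G k x) =
  (fun x => (f x + \sum_(k < m) a (widen_ord (leqnSn _) k) * G (widen_ord (leqnSn _) k) x)
     + a ord_max * G ord_max x).
  by apply: funext => x; rewrite big_ord_recr addrA.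
apply: posi_add_nn => //; exact: IH.
Qed.

End Posi.

Section Prod.
Variable R : realType.
Variables X1 X2 : Type.
Hypothesis hX1 : [set: X1] !=set0.
Hypothesis hX2 : [set: X2] !=set0.
Variables (B1 : set (set X1)) (B2 : set (set X2)).
Variables (D1 : set (X1 -> R)) (D2 : set (X2 -> R)).
Hypothesis hD1 : cone D1.
Hypothesis hD2 : cone D2.
Hypothesis hD1g : forall f, D1 f -> gamble f.
Hypothesis hD2g : forall f, D2 f -> gamble f.

Let Dp := D_prod B1 B2 D1 D2.
Let Gen := ([set g | exists f2 b1, D2 f2 /\ (B1 `|` [set setT]) b1 /\
                 g = (fun x => f2 x.2 * \1_b1 x.1)] `|`
        [set g | exists f1 b2, D1 f1 /\ (B2 `|` [set setT]) b2 /\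
                 g = (fun x => f1 x.1 * \1_b2 x.2)]) `|` @G_gt0 R (X1 * X2).

Lemma Dp_posi : Dp = posi Gen. Proof. by []. Qed.

Let d : (X1 -> R) * set X2 := (fun _ => 0, set0).

Definition Good (F : X1 * X2 -> R) := exists l : seq ((X1 -> R) * set X2),
  (forall j, (j < size l)%N -> D1 (nth d l j).1) /\
  forall x1, Dplus D2 (fun x2 => F (x1, x2) - \sum_(p <- l) p.1 x1 * \1_(p.2) x2).

Lemma set_ext (T : Type) (S : set T) a b : S a -> a = b -> S b.
Proof. by move=> + <-. Qed.

Lemma Dplus_ext (X : Type) (D : set (X -> R)) f g : Dplus D f -> f = g -> Dplus D g.
Proof. by move=> + <-. Qed.

Lemma Good_add F G : Good F -> Good G -> Good (fun x => F x + G x).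
Proof.
move=> [l [hl hF]] [l' [hl' hG]]; exists (l ++ l'); split.
  move=> j; rewrite size_cat nth_cat => hj; case: ifP => jl; first exact: hl.
  by apply: hl'; move/negbT: jl; lia.
move=> x1; have := Dplus_add hD2 (hF x1) (hG x1). move/Dplus_ext. apply.
by apply: funext => x2; rewrite big_cat /=; lra.
Qed.

Lemma Good_scale F lam : Good F -> 0 < lam -> Good (fun x => lam * F x).
Proof.
move=> [l [hl hF]] l0; exists (map (fun p => (fun x => lam * p.1 x, p.2)) l); split.
  move=> j; rewrite size_map => jl; rewrite (nth_map d) //=.
  by apply: D_scale => //; apply: hl.
move=> x1; have := Dplus_scale hD2 (hF x1) (ltW l0). move/Dplus_ext. apply.
apply: funext => x2; rewrite big_map /= mulrBr mulr_sumr; congr (_ - _).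
by apply: eq_bigr => p _; rewrite mulrA.
Qed.

Lemma Gen_Good : Gen `<=` Good.
Proof.
move=> F [[[f2 [b1 [Df2 [_ ->]]]]|[f1 [b2 [Df1 [_ ->]]]]]|[gF [F0 _]]].
- exists [::]; split => // x1; rewrite /=.
  case: (boolP (x1 \in b1)) => xb.
    left; apply: (set_ext Df2); apply: funext => x2.
    by rewrite big_nil /= indicE xb mulr1 subr0.
  right; have -> : (fun x2 => f2 (x1, x2).2 * \1_b1 (x1, x2).1 -
      \sum_(p <- [::]) p.1 x1 * \1_(p.2) x2) = (fun _ => 0).
    by apply: funext => x2; rewrite big_nil /= indicE (negbTE xb) mulr0 subr0.
  by split; [apply: gamble_cst | move=> x].
- exists [:: (f1, b2)]; split.
    by move=> [|j] //.
  move=> x1; right.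
  have -> : (fun x2 => f1 (x1, x2).1 * \1_b2 (x1, x2).2 -
      \sum_(p <- [:: (f1, b2)]) p.1 x1 * \1_(p.2) x2) = (fun _ => 0).
    by apply: funext => x2; rewrite big_seq1 /= subrr.
  by split; [apply: gamble_cst | move=> x].
- exists [::]; split => // x1; right.
  have -> : (fun x2 => F (x1, x2) - \sum_(p <- [::]) p.1 x1 * \1_(p.2) x2) =
    (fun x2 => F (x1, x2)) by apply: funext => x2; rewrite big_nil subr0.
  split; first exact: (gamble_comp (fun x2 => (x1, x2)) gF).
  by move=> x2; apply: F0.
Qed.

Lemma Dp_Good F : Dp F -> Good F.
Proof.
apply: posi_sub; [exact: Good_add | exact: Good_scale | exact: Gen_Good].
Qed.

End Prod.

Section Upper.
Variable R : realType.
Variables X1 X2 : Type.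
Hypothesis hX1 : [set: X1] !=set0.
Hypothesis hX2 : [set: X2] !=set0.
Variables (B1 : set (set X1)) (B2 : set (set X2)).
Variables (D1 : set (X1 -> R)) (D2 : set (X2 -> R)).
Hypothesis hD1 : cone D1.
Hypothesis hD2 : cone D2.
Hypothesis hD1g : forall f, D1 f -> gamble f.
Hypothesis hD2g : forall f, D2 f -> gamble f.

Lemma Dplus_sum (X : Type) (D : set (X -> R)) n (F : nat -> X -> R) : cone D ->
  (forall i, (i < n)%N -> Dplus D (F i)) -> Dplus D (fun x => \sum_(i < n) F i x).
Proof.
move=> hD; elim: n => [|n IH] H.
  right; split.
    by exists 0 => x; rewrite big_ord0 normr0.
  by move=> x; rewrite big_ord0.
have := Dplus_add hD (IH (fun i hi => H i (ltnW hi))) (H n (ltnSn n)).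
move/Dplus_ext; apply; apply: funext => x; by rewrite big_ord_recr.
Qed.

Let d : (X1 -> R) * set X2 := (fun _ => 0, set0).

Lemma upper (h : X2 -> R) (g : X1 -> R) mu : gamble h -> G_ge0 g ->
  D_prod B1 B2 D1 D2 (fun x => g x.1 * h x.2 - mu) ->
  mu <= L D1 (fun x1 => g x1 * L D2 h).
Proof.
move=> gh [gg g0] /(Dp_Good hD1 hD2) [l [hl hF]].
pose vs := fun i : nat => match i with 0 => fun _ : X2 => 1 | 1 => h
   | k.+2 => fun x2 => \1_((nth d l k).2) x2 : R end.
have hvs : forall i, gamble (vs i).
  by case => [|[|k]] /=; [apply: gamble_cst | exact gh | apply: gamble_indic].
have [qs [q0 [q1 Hd]]] := @HB_full R X2 hX2 D2 hD2 vs hvs h erefl erefl (size l).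
set c := L D2 h.
have qpos : forall j, (j < size l)%N -> 0 <= qs j.+2.
  move=> j hj; apply: le_trans (Dom_le Hd _); last by rewrite ltnS.
  apply: (le_L hX2 hD2 (hvs _)) => x /=; exact: (proj1 (@indic_01 R _ _ x)).
pose Rf := fun x1 => \sum_(j < size l) qs j.+2 * (nth d l j).1 x1.
have key : forall x1, Rf x1 <= g x1 * c - mu.
  move=> x1; pose t := fun i : nat => match i with 0 => -mu | 1 => g x1
     | k.+2 => - (nth d l k).1 x1 end.
  have hW : W vs (size l).+2 t = (fun x2 => (g (x1,x2).1 * h (x1,x2).2 - mu)
      - \sum_(p <- l) p.1 x1 * \1_(p.2) x2).
    apply: funext => x2; rewrite /W !big_ord_recl /= (big_nth d) big_mkord.
    rewrite -sumrN; set S1 := \sum_(i < size l) _; set S2 := \sum_(i < size l) _.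
    have -> : S1 = S2 by apply: eq_bigr => i _; rewrite mulNr.
    lra.
  have hQ : Q (size l).+2 t qs = g x1 * c - mu - Rf x1.
    rewrite /Q !big_ord_recl /= q0 q1 /Rf -sumrN; set S1 := \sum_(i < size l) _.
    set S2 := \sum_(i < size l) _.
    have -> : S1 = S2 by apply: eq_bigr => i _; rewrite mulNr mulrC.
    rewrite /c; lra.
  have H0 : 0 <= L D2 (W vs (size l).+2 t).
    have := L_Dplus hX2 hD2 (gamble_W hvs (size l).+2 t); apply; rewrite hW; exact: hF x1.
  have := Hd t; rewrite hQ; lra.
have DRf : Dplus D1 Rf.
  apply: (@Dplus_sum _ D1 (size l) (fun j x => qs j.+2 * (nth d l j).1 x) hD1) => j hj.
  apply: Dplus_scale => //; last exact: qpos.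
  by left; apply: hl.
have gRf : gamble Rf.
  apply: (@gamble_sum _ _ _ (fun j x => qs j.+2 * (nth d l j).1 x)) => j hj.
  by apply: gamble_mul; [apply: gamble_cst | apply: hD1g; apply: hl].
have ggc : gamble (fun x1 => g x1 * c) by apply: gamble_mul => //; apply: gamble_cst.
have rest : G_ge0 (fun x1 => g x1 * c - mu - Rf x1).
  split; last by move=> x; have := key x; lra.
  by apply: gamble_sub => //; apply: gamble_sub => //; apply: gamble_cst.
have := Dplus_add hD1 DRf (or_intror rest).
move/Dplus_ext => /(_ (fun x1 => g x1 * c - mu)) [].
  by apply: funext => x; lra.
  by move=> D; apply: (L_ge hX1 hD1 ggc).
by move=> [_ nn]; apply: (le_L hX1 hD1 ggc) => x; have := nn x; lra.
Qed.

End Upper.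

Section Lower.
Variable R : realType.
Variables X1 X2 : Type.
Hypothesis hX1 : [set: X1] !=set0.
Hypothesis hX2 : [set: X2] !=set0.
Variables (B1 : set (set X1)) (B2 : set (set X2)).
Variables (D1 : set (X1 -> R)) (D2 : set (X2 -> R)).
Hypothesis hD1 : cone D1.
Hypothesis hD2 : cone D2.

Lemma lower (h : X2 -> R) (g : X1 -> R) mu : gamble h -> B_measurable B1 g ->
  mu < L D1 (fun x1 => g x1 * L D2 h) ->
  D_prod B1 B2 D1 D2 (fun x => g x.1 * h x.2 - mu).
Proof.
move=> gh [[gg g0] [gs [hgs conv]]] mlt.
set c := L D2 h in mlt *.
have [x0 _] := hX1; have [y0 _] := hX2.
have [Mh hMh] := gh; have [Mg hMg] := gg.
have Mg0 : 0 <= Mg by apply: le_trans (hMg x0).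
have ggc : gamble (fun x1 => g x1 * c) by apply: gamble_mul => //; apply: gamble_cst.
set mu' := (mu + L D1 (fun x1 => g x1 * c)) / 2.
have mlt' : mu < mu' by rewrite /mu'; lra.
have Dmu' : D1 (fun x => g x * c - mu') by apply: (L_gt hX1 hD1 ggc); rewrite /mu'; lra.
set dd := mu' - mu; have dd0 : 0 < dd by rewrite /dd; lra.
set eps := dd / (3 * (Mg + 1)).
have eps0 : 0 < eps by rewrite /eps divr_gt0 //; lra.
have epsM : eps * Mg <= dd / 3.
  have e1 : eps * (Mg + 1) = dd / 3 by rewrite /eps; field; lra.
  nra.
set K := Mh + `|c| + eps.
have K0 : 0 < K by rewrite /K; have := hMh y0; have := normr_ge0 c; have := normr_ge0 (h y0); lra.
set del := dd / (3 * K).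
have del0 : 0 < del by rewrite /del divr_gt0 //; lra.
have delK : del * K = dd / 3 by rewrite /del; field; lra.
set f2 := fun x2 => h x2 - (c - eps).
have Df2 : D2 f2 by apply: (L_gt hX2 hD2 gh); rewrite /c; lra.
have f2K : forall x2, `|f2 x2| <= K.
  move=> x2; rewrite /f2 /K; apply: le_trans (ler_normB _ _) _.
  rewrite -addrA; apply: lerD; first exact: hMh.
  by apply: le_trans (ler_normB _ _) _; rewrite (gtr0_norm eps0).
have [N HN] := conv del del0.
have hN : forall x, `|g x - gs N x| <= del by apply: HN.
have [[m [c0 [cs [Bs [c00 [cs0 [hBs eN]]]]]]] [ggN _]] := hgs N.
pose A := ([set g | exists f2 b1, D2 f2 /\ (B1 `|` [set setT]) b1 /\
                 g = (fun x => f2 x.2 * \1_b1 x.1)] `|`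
        [set g | exists f1 b2, D1 f1 /\ (B2 `|` [set setT]) b2 /\
                 g = (fun x => f1 x.1 * \1_b2 x.2)]) `|` @G_gt0 R (X1 * X2).
change (posi A (fun x => g x.1 * h x.2 - mu)).
pose T3 := fun x : X1 * X2 => (g x.1 * c - mu') * \1_setT x.2.
pose P := fun x : X1 * X2 => (g x.1 - gs N x.1) * f2 x.2 + (mu' - mu - eps * g x.1).
have AT3 : A T3 by left; right; exists (fun x => g x * c - mu'), setT; split => //; split => //; right.
have AP : A P.
  right; split.
    have gf2 : gamble f2 by apply: gamble_sub => //; apply: gamble_cst.
    apply: gamble_add.
      apply: gamble_mul; last exact: (gamble_comp (fun x : X1 * X2 => x.2) gf2).
      exact: (gamble_comp (fun x : X1 * X2 => x.1) (gamble_sub gg ggN)).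
    apply: gamble_sub; first exact: gamble_cst.
    apply: gamble_mul; [apply: gamble_cst | exact: (gamble_comp (fun x : X1 * X2 => x.1) gg)].
  have Plb : forall x, dd / 3 <= P x.
    move=> [x1 x2]; rewrite /P /=.
    have h1 : - (del * K) <= (g x1 - gs N x1) * f2 x2.
      have : `|(g x1 - gs N x1) * f2 x2| <= del * K.
        by rewrite normrM; apply: ler_pM.
      by rewrite ler_norml => /andP[].
    have h2 : eps * g x1 <= dd / 3.
      apply: le_trans epsM; apply: ler_pM => //; first exact: ltW.
      by apply: le_trans (hMg x1); apply: ler_norm.
    rewrite /dd in delK h2 *; lra.
  split; first by move=> x; apply: le_trans (Plb x); lra.
  exists (x0, y0); apply/negP => /eqP e; have := Plb (x0, y0); rewrite e; lra.
have pTP : posi A (fun x => T3 x + P x) by apply: posi_add; apply: posi_in.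
have AG0 : A (fun x => f2 x.2 * \1_setT x.1).
  by left; left; exists f2, setT; split => //; split => //; right.
have pTPc : posi A (fun x => (T3 x + P x) + c0 * (f2 x.2 * \1_setT x.1)).
  exact: posi_add_nn.
have pall := @posi_add_sum R _ A _ m cs (fun k x => f2 x.2 * \1_(Bs k) x.1) pTPc cs0.
have : posi A (fun x => (T3 x + P x + c0 * (f2 x.2 * \1_setT x.1)) +
    \sum_(k < m) cs k * (f2 x.2 * \1_(Bs k) x.1)).
  apply: pall => k; left; left; exists f2, (Bs k); split => //; split => //; left.
  exact: hBs.
move=> Hp; apply: (set_ext Hp); apply: funext => x.
rewrite /T3 /P eN /= !indicE !in_setT /=.
have -> : \sum_(k < m) cs k * (f2 x.2 * \1_(Bs k) x.1) =
  (\sum_(k < m) cs k * \1_(Bs k) x.1) * f2 x.2.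
  by rewrite mulr_suml; apply: eq_bigr => k _; rewrite mulrCA mulrA [in RHS]mulrC mulrA.
rewrite /f2; ring.
Qed.

End Lower.

Section Connect.
Variable R : realType.

Lemma cond_setT (X : Type) (f : X -> R) mu :
  cond_gamble f setT mu = (fun x => f x - mu).
Proof. by apply: funext => x; rewrite /cond_gamble indicE in_setT mulr1. Qed.

Lemma esup_char (S : set R) a : (forall mu, S mu -> mu <= a) ->
  (forall mu, mu < a -> S mu) ->
  ereal_sup [set mu%:E | mu in S] = a%:E.
Proof.
move=> ub lb.
have S0 : S !=set0 by exists (a - 1); apply: lb; lra.
have hub : has_ubound S by exists a.
rewrite (ereal_sup_EFin hub S0); congr (_%:E).
apply/eqP; rewrite eq_le; apply/andP; split; first exact: ge_sup.
by apply: le_of_lt_all => v va; apply: ub_le_sup => //; apply: lb.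
Qed.

Lemma P_of_L (X : Type) (hX : [set: X] !=set0) (D : set (X -> R)) (f : X -> R) :
  cone D -> gamble f -> P_of D f setT = (L D f)%:E.
Proof.
move=> hD gf; rewrite /P_of.
have -> : [set mu | D (cond_gamble f setT mu)] = Sset D f.
  by apply: funext => mu /=; rewrite /Sset /= cond_setT.
have [S0 hub] := has_sup_S hX hD gf.
exact: ereal_sup_EFin.
Qed.

Lemma E_of_P_cone (X : Type) (hX : [set: X] !=set0) C (P : (X -> R) -> set X -> \bar R) :
  coherent_P C P -> cone (E_of_P C P) /\ (forall f, E_of_P C P f -> gamble f).
Proof.
move=> [CC [D [[Dg [Dgt [Dsc [Dadd Dle]]]] PD]]].
set A := [set g | exists f B (mu : R),
          C (f, B) /\ (mu%:E < P f B)%E /\ g = cond_gamble f B mu].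
have AD : A `<=` D.
  move=> g [f [B [mu [Cf [lt ->]]]]].
  rewrite PD // /P_of in lt; have [y [mu' Dmu' <-] lty] := ereal_sup_gt lt.
  rewrite lte_fin in lty.
  have [gfB B0] := CC _ Cf; rewrite /= in gfB B0.
  have [b Bb] : exists b, B b.
    by apply/set0P.
  have -> : cond_gamble f B mu = (fun x => cond_gamble f B mu' x + (mu' - mu) * \1_B x).
    by apply: funext => x; rewrite /cond_gamble; ring.
  apply: Dadd => //; apply: Dgt; split.
    by apply: gamble_mul; [apply: gamble_cst | apply: gamble_indic].
  split; first by move=> x; apply: mulr_ge0; [lra | exact: (proj1 (@indic_01 R _ _ x))].
  exists b; rewrite indicE mem_set // mulr1; apply/negP => /eqP; lra.
have Ag : A `<=` @gamble R X.
  move=> g [f [B [mu [Cf [lt ->]]]]]; have [gfB _] := CC _ Cf.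
  apply: gamble_mul; [apply: gamble_sub => //; apply: gamble_cst | apply: gamble_indic].
split; last first.
  apply: posi_sub.
  - by move=> f g; apply: gamble_add.
  - by move=> f lam gf _; apply: gamble_mul => //; apply: gamble_cst.
  - by move=> f [/Ag|[]].
split; first by move=> f gf; apply: posi_in; right.
split; first by move=> f lam; apply: posi_scale.
split; first by move=> f g; apply: posi_add.
move=> f fle Ef; apply: (Dle f fle).
move: f Ef {fle}; apply: posi_sub => //.
by move=> f [/AD|/Dgt].
Qed.

End Connect.

Section Final.
Variable R : realType.

Lemma Dp_swap (X1 X2 : Type) (B1 : set (set X1)) (B2 : set (set X2))
  (D1 : set (X1 -> R)) (D2 : set (X2 -> R)) F :
  D_prod B1 B2 D1 D2 F -> D_prod B2 B1 D2 D1 (fun y => F (y.2, y.1)).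
Proof.
move: F; apply: posi_sub.
- by move=> f g hf hg; exact: (posi_add hf hg).
- by move=> f lam hf l0; exact: (posi_scale hf l0).
move=> F [[[f2 [b1 [Df2 [hb ->]]]]|[f1 [b2 [Df1 [hb ->]]]]]|[gF [F0 [x Fx]]]].
- by apply: posi_in; left; right; exists f2, b1.
- by apply: posi_in; left; left; exists f1, b2.
apply: posi_in; right; split; first exact: (gamble_comp (fun y : X2 * X1 => (y.2, y.1)) gF).
split; first by move=> y; apply: F0.
by exists (x.2, x.1); case: x Fx.
Qed.

Section Char.
Variables X1 X2 : Type.
Hypothesis hX1 : [set: X1] !=set0.
Hypothesis hX2 : [set: X2] !=set0.
Variables (B1 : set (set X1)) (B2 : set (set X2)).
Variables (D1 : set (X1 -> R)) (D2 : set (X2 -> R)).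
Hypothesis hD1 : cone D1.
Hypothesis hD2 : cone D2.
Hypothesis hD1g : forall f, D1 f -> gamble f.
Hypothesis hD2g : forall f, D2 f -> gamble f.

Lemma char1 h g : gamble h -> B_measurable B1 g ->
  P_of (D_prod B1 B2 D1 D2) (fun x => g x.1 * h x.2) setT =
  (L D1 (fun x1 => g x1 * L D2 h))%:E.
Proof.
move=> gh mg; rewrite /P_of; apply: esup_char => mu /=; rewrite cond_setT.
  by move=> H; apply: (upper hX1 hX2 hD1 hD2 hD1g gh (proj1 mg) H).
by move=> lt; apply: (lower hX1 hX2 B2 hD1 hD2 gh mg lt).
Qed.

Lemma char2 h g : gamble h -> B_measurable B2 g ->
  P_of (D_prod B1 B2 D1 D2) (fun x => h x.1 * g x.2) setT =
  (L D2 (fun x2 => g x2 * L D1 h))%:E.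
Proof.
move=> gh mg; rewrite /P_of; apply: esup_char => mu /=; rewrite cond_setT.
  move=> H; have H2 := Dp_swap H.
  have H3 : D_prod B2 B1 D2 D1 (fun y => g y.1 * h y.2 - mu).
    by apply: (set_ext H2); apply: funext => y /=; rewrite mulrC.
  exact: (upper hX2 hX1 hD2 hD1 hD2g gh (proj1 mg) H3).
move=> lt; have H := lower hX2 hX1 B1 hD2 hD1 gh mg lt.
have H2 := Dp_swap H; apply: (set_ext H2); apply: funext => [[x1 x2]] /=.
by rewrite mulrC.
Qed.

End Char.

Lemma L_mulc (X : Type) (hX : [set: X] !=set0) (D : set (X -> R)) (g : X -> R) c :
  cone D -> gamble g -> 0 <= c -> L D (fun x => g x * c) = L D g * c.
Proof.
move=> hD gg c0; rewrite mulrC -(L_scale0 hX hD gg c0); congr L.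
by apply: funext => x; rewrite mulrC.
Qed.

Lemma L_mulc_neg (X : Type) (hX : [set: X] !=set0) (D : set (X -> R)) (g : X -> R) c :
  cone D -> gamble g -> c <= 0 -> L D (fun x => g x * c) = - L D (fun x => - g x) * c.
Proof.
move=> hD gg c0; have c0' : 0 <= - c by rewrite oppr_ge0.
rewrite mulNr -mulrN mulrC -(L_scale0 hX hD (gamble_opp gg) c0'); congr L.
by apply: funext => x; rewrite mulrNN mulrC.
Qed.

End Final.

Theorem corollary22 (R : realType) (X1 X2 : Type)
  (hX1 : [set: X1] !=set0) (hX2 : [set: X2] !=set0)
  (B1 : set (set X1)) (B2 : set (set X2))
  (hB1 : forall b, B1 b -> b != set0) (hB2 : forall b, B2 b -> b != set0)
  (C1 : set ((X1 -> R) * set X1)) (P1 : (X1 -> R) -> set X1 -> \bar R)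
  (C2 : set ((X2 -> R) * set X2)) (P2 : (X2 -> R) -> set X2 -> \bar R)
  (hP1 : coherent_P C1 P1) (hP2 : coherent_P C2 P2) :
  (* case i = 1, j = 2 *)
  (forall (h : X2 -> R) (g : X1 -> R), gamble h -> B_measurable B1 g ->
    let Ejh := nat_ext_u C2 P2 h in
    let lhs := prod_P B1 B2 C1 P1 C2 P2 (fun x => g x.1 * h x.2) setT in
    lhs = nat_ext_u C1 P1 (fun x => g x * fine Ejh) /\
    ((0 <= Ejh)%E -> lhs = (nat_ext_u C1 P1 g * Ejh)%E) /\
    ((Ejh <= 0)%E -> lhs = (nat_ext_upper C1 P1 g * Ejh)%E)) /\
  (* case i = 2, j = 1 *)
  (forall (h : X1 -> R) (g : X2 -> R), gamble h -> B_measurable B2 g ->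
    let Ejh := nat_ext_u C1 P1 h in
    let lhs := prod_P B1 B2 C1 P1 C2 P2 (fun x => h x.1 * g x.2) setT in
    lhs = nat_ext_u C2 P2 (fun x => g x * fine Ejh) /\
    ((0 <= Ejh)%E -> lhs = (nat_ext_u C2 P2 g * Ejh)%E) /\
    ((Ejh <= 0)%E -> lhs = (nat_ext_upper C2 P2 g * Ejh)%E)).
Proof.
have [hE1 hE1g] := E_of_P_cone hX1 hP1.
have [hE2 hE2g] := E_of_P_cone hX2 hP2.
split.
- move=> h g gh mg Ejh lhs.
  have gg : gamble g by case: mg => [[]].
  have eE : Ejh = (L (E_of_P C2 P2) h)%:E by rewrite /Ejh /nat_ext_u /nat_ext P_of_L.
  have el : lhs = (L (E_of_P C1 P1) (fun x1 => g x1 * L (E_of_P C2 P2) h))%:E.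
    by rewrite /lhs /prod_P char1.
  rewrite /nat_ext_upper /nat_ext_u /nat_ext eE /= el.
  set c := L (E_of_P C2 P2) h.
  have ggc : gamble (fun x => g x * c) by apply: gamble_mul => //; apply: gamble_cst.
  split; first by rewrite P_of_L.
  split.
    by rewrite lee_fin => c0; rewrite P_of_L // L_mulc.
  rewrite lee_fin => c0; rewrite P_of_L //; last exact: gamble_opp.
  by rewrite L_mulc_neg.
- move=> h g gh mg Ejh lhs.
  have gg : gamble g by case: mg => [[]].
  have eE : Ejh = (L (E_of_P C1 P1) h)%:E by rewrite /Ejh /nat_ext_u /nat_ext P_of_L.
  have el : lhs = (L (E_of_P C2 P2) (fun x2 => g x2 * L (E_of_P C1 P1) h))%:E.
    by rewrite /lhs /prod_P char2.
  rewrite /nat_ext_upper /nat_ext_u /nat_ext eE /= el.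
  set c := L (E_of_P C1 P1) h.
  have ggc : gamble (fun x => g x * c) by apply: gamble_mul => //; apply: gamble_cst.
  split; first by rewrite P_of_L.
  split.
    by rewrite lee_fin => c0; rewrite P_of_L // L_mulc.
  rewrite lee_fin => c0; rewrite P_of_L //; last exact: gamble_opp.
  by rewrite L_mulc_neg.
Qed.
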